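(* Let $G$ be a finite set and let $\|\cdot\|$ be a quasi-algebra predual norm on $\mathbb{R}^G$ with respect to a convex compact set $\mathcal{F}\subseteq\mathbb{R}^G$, with associated functions $c,C$ and operator $\mathcal{D}$. If $\psi\in\mathbb{R}^G$ satisfies $\|\psi\|^*_{BAC}\le1$, then $\|\psi^m\|^*\le C(m)$ for every $m\ge1$.
   Context: $\mathbb{R}^G$ carries the inner product $\langle f,g\rangle=\mathbb{E}_{x\in G}f(x)g(x)$; $\psi^m$ is the pointwise power. A norm $\|\cdot\|$ on $\mathbb{R}^G$ is quasi-algebra predual with respect to a convex compact $\mathcal{F}$ if there are $c:\mathbb{R}^+\to\mathbb{R}^+$, $C:\mathbb{Z}^+\to\mathbb{R}^+$ and an operator $\mathcal{D}:\mathbb{R}^G\to\mathbb{R}^G$ such that: (1) $\langle f,\mathcal{D}f\rangle\le1$ for $f\in\mathcal{F}$; (2) $\langle f,\mathcal{D}f\rangle\ge c(\epsilon)$ for $f\in\mathcal{F}$ with $\|f\|\ge\epsilon$; (3) $\|\mathcal{D}f_1\cdots\mathcal{D}f_m\|^*\le C(m)$ for $f_1,\dots,f_m\in\mathcal{F}$, where $\|g\|^*=\sup\{|\langle g,h\rangle|:\|h\|\le1\}$; (4) $\{\mathcal{D}f:f\in\mathcal{F}\}$ is compact and spans $\mathbb{R}^G$. $\|g\|_{BAC}=\max\{|\langle g,\mathcal{D}f\rangle|:f\in\mathcal{F}\}$ and $\|\cdot\|^*_{BAC}$ is its dual norm. *)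

(* Defs.v *)
From mathcomp Require Import all_boot all_order all_algebra.
From mathcomp Require Import all_classical all_reals all_analysis.
Set Implicit Arguments.
Unset Strict Implicit.
Unset Printing Implicit Defensive.
Import Order.TTheory GRing.Theory Num.Theory.
Local Open Scope ring_scope.
Local Open Scope classical_set_scope.

Section QAP.
Variables (R : realType) (G : finType).

(* R^G is represented by functions G -> R; the inner product is the average. *)
Definition inner (f g : G -> R) : R := (\sum_(x : G) f x * g x) / #|G|%:R.

Definition ppow (psi : G -> R) (m : nat) : G -> R := fun x => psi x ^+ m.

Definition is_norm (N : (G -> R) -> R) : Prop :=
  [/\ (forall f, 0 <= N f),
      (forall f, N f = 0 -> f = (fun _ => 0)),
      (forall (a : R) f, N (fun x => a * f x) = `|a| * N f) &
      (forall f g, N (fun x => f x + g x) <= N f + N g)].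

Definition dual_norm (N : (G -> R) -> R) (g : G -> R) : R :=
  sup [set r : R | exists h, N h <= 1 /\ r = `|inner g h|].

Definition convex_set (F : set (G -> R)) : Prop :=
  forall f g (t : R), F f -> F g -> 0 <= t <= 1 ->
    F (fun x => t * f x + (1 - t) * g x).

Definition compact_RG (A : set (G -> R)) : Prop := @compact {ptws G -> R^o} A.

Definition spans (A : set (G -> R)) : Prop :=
  forall g : G -> R, exists (n : nat) (v : 'I_n -> G -> R) (a : 'I_n -> R),
    (forall i, A (v i)) /\ (forall x, g x = \sum_(i < n) a i * v i x).

Definition quasi_algebra_predual (N : (G -> R) -> R) (F : set (G -> R))
    (c : R -> R) (C : nat -> R) (D : (G -> R) -> (G -> R)) : Prop :=
  (forall eps : R, 0 < eps -> 0 < c eps) /\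
  (forall m : nat, (0 < m)%N -> 0 < C m) /\
  (forall f, F f -> inner f (D f) <= 1) /\
      (forall f (eps : R), 0 < eps -> F f -> eps <= N f ->
          c eps <= inner f (D f)) /\
      (forall (m : nat) (fs : 'I_m -> G -> R), (0 < m)%N ->
          (forall i, F (fs i)) ->
          dual_norm N (fun x => \prod_(i < m) D (fs i) x) <= C m) /\
  compact_RG (D @` F) /\
  spans (D @` F).

Definition BAC_norm (F : set (G -> R)) (D : (G -> R) -> (G -> R)) (g : G -> R) : R :=
  sup [set r : R | exists f, F f /\ r = `|inner g (D f)|].

Definition BAC_dual (F : set (G -> R)) (D : (G -> R) -> (G -> R)) (psi : G -> R) : R :=
  dual_norm (BAC_norm F D) psi.

End QAP.

(* Main.v *)
Require Import Defs.
From mathcomp Require Import all_boot all_order all_algebra.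
From mathcomp Require Import all_classical all_reals all_analysis.
From mathcomp Require Import ring.
Import Order.TTheory GRing.Theory Num.Theory.
Local Open Scope ring_scope.
Local Open Scope classical_set_scope.

Section NE.
Variables (R : realType) (G : finType) (N : (G -> R) -> R).
Hypothesis N0 : forall f, 0 <= N f.
Hypothesis Ndef : forall f, N f = 0 -> f = (fun _ => 0).
Hypothesis Nhom : forall (a : R) f, N (fun x => a * f x) = `|a| * N f.
Hypothesis Ntri : forall f g, N (fun x => f x + g x) <= N f + N g.

Lemma Nzero : N (fun _ => 0) = 0.
Proof.
by move: (Nhom 0 (fun _ => 0)); rewrite normr0 !mul0r => ->.
Qed.

Lemma Nsub f g : N f - N g <= N (fun x => f x - g x).
Proof.
rewrite lerBlDr; have := Ntri (fun x => f x - g x) g.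
by have -> : (fun x => f x - g x + g x) = f by apply: funext => ?; rewrite subrK.
Qed.

Definition ee (y : G) : G -> R := fun x => (x == y)%:R.

Lemma Nsum (s : seq G) (a : G -> R) :
  N (fun x => \sum_(y <- s) a y * ee y x) <= \sum_(y <- s) `|a y| * N (ee y).
Proof.
elim: s => [|y s IH].
  have -> : (fun x => \sum_(y <- [::]) a y * ee y x) = fun _ => 0.
    by apply: funext => ?; rewrite big_nil.
  by rewrite Nzero big_nil.
rewrite big_cons.
have -> : (fun x => \sum_(z <- y :: s) a z * ee z x) =
   (fun x => (fun x => a y * ee y x) x + (fun x => \sum_(z <- s) a z * ee z x) x).
  by apply: funext => ?; rewrite big_cons.
by apply: le_trans (Ntri _ _) _; rewrite Nhom lerD2l.
Qed.

Lemma decomp (h : G -> R) : h = fun x => \sum_(y <- enum G) h y * ee y x.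
Proof.
apply: funext => x; rewrite big_enum /= (bigD1 x) //= /ee eqxx mulr1 big1 ?addr0 //.
by move=> y yx; rewrite eq_sym (negbTE yx) mulr0.
Qed.

Let n := #|G|.
Definition hv (v : 'rV[R]_n) : G -> R := fun x => v ord0 (enum_rank x).

Lemma entry_le (v : 'rV[R]_n) i : `|v ord0 i| <= `|v|.
Proof.
by rewrite [leRHS]/Num.norm /= mx_normrE; apply/bigmax_geP; right => /=; exists (ord0, i).
Qed.

Let L := \sum_(y <- enum G) N (ee y).

Lemma Nhv v : N (hv v) <= `|v| * L.
Proof.
rewrite {1}(decomp (hv v)); apply: le_trans (Nsum _ _) _.
rewrite /L mulr_sumr; apply: ler_sum => y _; apply: ler_wpM2r => //.
exact: entry_le.
Qed.

Lemma phi_lip v w : `|N (hv v) - N (hv w)| <= `|v - w| * L.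
Proof.
have E : forall a b, (fun x => hv a x - hv b x) = hv (a - b).
  by move=> a b; apply: funext => x; rewrite /hv !mxE.
rewrite ler_norml; apply/andP; split.
  rewrite lerNl opprB; apply: le_trans (Nsub _ _) _; rewrite E.
  by apply: le_trans (Nhv _) _; rewrite distrC.
by apply: le_trans (Nsub _ _) _; rewrite E; exact: Nhv.
Qed.

Definition VV := ('rV[R]_n : normedModType R).
Definition RR := (R : normedModType R).
Definition phi : VV -> RR := fun v => N (hv v).

Lemma phi_cont : continuous phi.

Proof.
move=> v; apply/(@cvgrPdist_le _ _ _ (nbhs v) (nbhs_filter v)) => e e0.
have L0 : 0 < L + 1 by rewrite ltr_wpDl // /L sumr_ge0.
have eL : 0 < e / (L + 1) by rewrite divr_gt0.
have := @cvgr_dist_le _ _ _ (nbhs v) (nbhs_filter v) id v (@cvg_id _ (nbhs v)) _ eL.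
apply: filterS => w vw.
apply: le_trans (phi_lip _ _) _.
apply: le_trans (_ : `|v - w| * (L + 1) <= _).
  by apply: ler_wpM2l => //; rewrite lerDl.
by rewrite -ler_pdivlMr.
Qed.

Lemma norm_equiv : exists2 k, 0 < k & forall h x, `|h x| <= k * N h.
Proof.
have [[x0 _]|noG] := pselect (exists x : G, True); last first.
  by exists 1 => // h x; exfalso; apply: noG; exists x.
pose S : set VV := (@Num.norm R 'rV[R]_n) @^-1` [set x | x = 1].
have Scl : closed S.
  exact: (proj1 (@continuous_closedP VV RR _) (@norm_continuous R 'rV[R]_n) _ (@closed_eq R 1)).
have Sco : compact S.
  apply: bounded_closed_compact Scl.
  exists 1; split; first exact: num_real.
  by move=> y y1 v /= ->; exact: ltW.
pose v0 : 'rV[R]_n := const_mx 1.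
have v0n : `|v0| != 0.
  rewrite normr_eq0; apply/eqP => /(congr1 (fun v : 'rV[R]_n => v ord0 (enum_rank x0))).
  by rewrite !mxE => /eqP; rewrite oner_eq0.
have Sne : S !=set0.
  by exists (`|v0|^-1 *: v0); rewrite /S /= normrZV // unitfE.
have Nw : {within S, continuous phi} by apply: continuous_subspaceT; exact: phi_cont.
have [c /set_mem Sc cmin] := @compact_EVT_min VV R phi S Sne Sco Nw.
rewrite /phi in cmin.
have cpos : 0 < N (hv c).
  rewrite lt_def N0 andbT; apply/eqP => /Ndef hc0.
  suff c0 : c = 0 by move: Sc; rewrite /S /= c0 normr0 => /esym/eqP; rewrite oner_eq0.
  apply/rowP => i; rewrite !mxE.
  have := congr1 (fun f => f (enum_val i)) hc0; rewrite /hv /= enum_valK.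
  by rewrite (ord1 ord0).
exists (N (hv c))^-1; first by rewrite invr_gt0.
move=> h x.
pose v : 'rV[R]_n := \row_i h (enum_val i).
have hvv : hv v = h by apply: funext => y; rewrite /hv mxE enum_rankK.
have [v0'|vn0] := eqVneq v 0.
  have : h x = 0 by rewrite -hvv v0' /hv mxE.
  by move=> ->; rewrite normr0 mulr_ge0 // invr_ge0 N0.
have vn : `|v| \is a GRing.unit by rewrite unitfE normr_eq0.
have := cmin (`|v|^-1 *: v); rewrite inE /S /= normrZV // => /(_ erefl).
have -> : hv (`|v|^-1 *: v) = fun y => `|v|^-1 * h y.
  by apply: funext => y; rewrite /hv mxE -hvv /hv.
rewrite Nhom ger0_norm ?invr_ge0 // => le1.
have hxv : `|h x| <= `|v| by rewrite -hvv; apply: entry_le.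
apply: le_trans hxv _.
rewrite mulrC ler_pdivlMr //.
have vpos : 0 < `|v| by rewrite normr_gt0.
by rewrite -ler_pdivlMl // mulrC.
Qed.
End NE.

Lemma DB (R : realType) (G : finType) (A : set (G -> R)) : compact_RG A ->
  forall x, exists M, forall f, A f -> `|f x| <= M.
Proof.
move=> Ac x.
pose A' : set {ptws G -> R^o} := A.
have pc : {within A', continuous (@proj G (fun _ => R^o) x : {ptws G -> R^o} -> R^o)}.
  by apply: continuous_subspaceT; exact: proj_continuous.
have := @compact_bounded R R^o _ (continuous_compact pc Ac).
move=> [M [_ HM]]; exists (M + 1) => f Af.
have := HM (M + 1); rewrite ltrDl ltr01 => /(_ isT (f x)).
by apply; exists f.
Qed.

Section Aux.
Variables (R : realType) (G : finType).

Lemma sup_le_ub (E : set R) x : 0 <= x -> (forall r, E r -> r <= x) -> sup E <= x.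
Proof.
move=> x0 Ex; have [ne|ne] := pselect (E !=set0).
  by apply: ge_sup => // r Er; exact: Ex.
by rewrite sup_out // => -[].
Qed.

Lemma le_sup (E : set R) r M : E r -> (forall s, E s -> s <= M) -> r <= sup E.
Proof.
move=> Er EM; apply: (@sup_upper_bound R E) => //; split; first by exists r.
by exists M => s Es; exact: EM.
Qed.

Lemma inner_bound (g h : G -> R) (B : G -> R) : (forall x, `|h x| <= B x) ->
  `|inner g h| <= (\sum_x `|g x| * B x) / #|G|%:R.
Proof.
move=> hB; rewrite /inner normrM normfV normr_nat.
apply: ler_wpM2r; first by rewrite invr_ge0.
apply: le_trans (ler_norm_sum _ _ _) _; apply: ler_sum => x _.
by rewrite normrM; apply: ler_wpM2l.
Qed.

Lemma inner_scalel a (g h : G -> R) : inner (fun x => a * g x) h = a * inner g h.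
Proof. by rewrite /inner mulrA mulr_sumr; congr (_ / _); apply: eq_bigr => x _; rewrite mulrA. Qed.

Lemma inner_scaler a (g h : G -> R) : inner g (fun x => a * h x) = a * inner g h.
Proof. by rewrite /inner mulrA mulr_sumr; congr (_ / _); apply: eq_bigr => x _; rewrite mulrCA. Qed.

Lemma inner_lin (h : G -> R) k (a : 'I_k -> R) (v : 'I_k -> G -> R) :
  inner h (fun y => \sum_(i < k) a i * v i y) = \sum_(i < k) a i * inner h (v i).
Proof.
rewrite /inner.
under eq_bigr do rewrite mulr_sumr.
rewrite exchange_big /= mulr_suml; apply: eq_bigr => i _.
rewrite mulrA mulr_sumr; congr (_ / _); apply: eq_bigr => x _; rewrite mulrCA.
by [].
Qed.
End Aux.


Theorem mainTheorem16 (R : realType) (G : finType)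
    (N : (G -> R) -> R) (F : set (G -> R))
    (c : R -> R) (C : nat -> R) (D : (G -> R) -> (G -> R)) :
  is_norm N ->
  convex_set F -> compact_RG F ->
  quasi_algebra_predual N F c C D ->
  forall psi : G -> R, BAC_dual F D psi <= 1 ->
  forall m : nat, (1 <= m)%N -> dual_norm N (ppow psi m) <= C m.
Proof.
move=> [N0 Ndef Nhom Ntri] _ _ [cpos [Cpos [H1 [H2 [H3 [Hcomp Hspan]]]]]] psi Hpsi m m1.
have [k k0 Nk] := @norm_equiv R G N N0 Ndef Nhom Ntri.
have dualN : forall g h, N h <= 1 -> `|inner g h| <= dual_norm N g.
  move=> g h Nh; apply: (@le_sup _ _ _ ((\sum_x `|g x| * k) / #|G|%:R)).
    by exists h.
  move=> s [h' [Nh' ->]]; apply: inner_bound => x.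
  by apply: le_trans (Nk h' x) _; rewrite ler_piMr // ltW.
have [MD HMD] := choice (@DB R G _ Hcomp).
have BACge : forall g f, F f -> `|inner g (D f)| <= BAC_norm F D g.
  move=> g f Ff; apply: (@le_sup _ _ _ ((\sum_x `|g x| * MD x) / #|G|%:R)).
    by exists f.
  move=> s [f' [Ff' ->]]; apply: inner_bound => x; apply: HMD.
  by exists f'.
have BB : forall x, exists B, forall h, BAC_norm F D h <= 1 -> `|h x| <= B.
  move=> x.
  have [k' [v [a [Hv Hdec]]]] := Hspan (fun y => (y == x)%:R * #|G|%:R).
  exists (\sum_i `|a i|) => h Hh.
  have nG : #|G|%:R != 0 :> R.
    by rewrite pnatr_eq0 -lt0n; apply/card_gt0P; exists x.
  have E : h x = inner h (fun y => \sum_i a i * v i y).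
    rewrite -(funext Hdec) /inner (bigD1 x) //= eqxx mul1r big1 ?addr0.
      by rewrite mulfK.
    by move=> y /negbTE ->; rewrite mul0r mulr0.
  rewrite E inner_lin; apply: le_trans (ler_norm_sum _ _ _) _.
  apply: ler_sum => i _; rewrite normrM; apply: ler_piMr => //.
  have [f Ff <-] := Hv i.
  by apply: le_trans (BACge _ _ Ff) Hh.
have [BF HBF] := choice BB.
have dualB : forall h, BAC_norm F D h <= 1 -> `|inner psi h| <= 1.
  move=> h Hh; apply: le_trans Hpsi.
  apply: (@le_sup _ _ _ ((\sum_x `|psi x| * BF x) / #|G|%:R)); first by exists h.
  move=> s [h' [Hh' ->]]; apply: inner_bound => x; exact: HBF.
have Cm : 0 < C m by apply: Cpos.
suff key : forall h, N h <= 1 -> `|inner (ppow psi m) h| <= C m.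
  by apply: sup_le_ub; [exact: ltW | move=> r [h [Nh ->]]; exact: key].
move=> h Nh.
have step : forall j, (j <= m)%N -> forall fs : 'I_m -> G -> R,
    (forall i : 'I_m, (j <= i)%N -> F (fs i)) ->
    `|inner (fun x => psi x ^+ j * \prod_(i < m | (j <= i)%N) D (fs i) x) h| <= C m.
  elim=> [_ fs Hfs | j IH jm fs Hfs].
    have -> : (fun x => psi x ^+ 0 * \prod_(i < m | (0 <= i)%N) D (fs i) x)
              = fun x => \prod_(i < m) D (fs i) x.
      by apply: funext => x; rewrite expr0 mul1r; apply: eq_bigl.
    apply: le_trans (dualN _ _ Nh) _.
    by apply: H3 => // i; apply: Hfs.
  pose oj : 'I_m := Ordinal jm.
  pose g := fun x => h x * psi x ^+ j * \prod_(i < m | (j.+1 <= i)%N) D (fs i) x.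
  have gB : forall f, F f -> `|inner g (D f)| <= C m.
    move=> f Ff; pose fs' := fun i : 'I_m => if i == oj then f else fs i.
    have Hfs' : forall i : 'I_m, (j <= i)%N -> F (fs' i).
      move=> i ji; rewrite /fs'; case: eqP => [_|/eqP ne]; first exact: Ff.
      apply: Hfs; rewrite ltn_neqAle ji andbT.
      by apply: contra ne => /eqP e; apply/eqP/val_inj.
    have := IH (ltnW jm) fs' Hfs'.
    suff -> : inner g (D f) =
       inner (fun x => psi x ^+ j * \prod_(i < m | (j <= i)%N) D (fs' i) x) h by [].
    rewrite /inner; congr (_ / _); apply: eq_bigr => x _.
    rewrite (bigD1 oj) //= /fs' eqxx.
    have -> : \prod_(i < m | (j <= i)%N && (i != oj))
                 D (if i == oj then f else fs i) x =
              \prod_(i < m | (j.+1 <= i)%N) D (fs i) x.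
      rewrite big_mkcond [RHS]big_mkcond; apply: eq_bigr => i _.
      case: eqP => [->|/eqP ne] /=; first by rewrite ltnn andbF.
      have jn : (j != i)%N by apply: contra ne => /eqP e; apply/eqP/val_inj.
      by rewrite andbT ltn_neqAle jn.
    rewrite /g; ring.
  have Ci : 0 <= (C m)^-1 by rewrite invr_ge0 ltW.
  have BACg : BAC_norm F D (fun x => (C m)^-1 * g x) <= 1.
    apply: sup_le_ub; first exact: ler01.
    move=> r [f [Ff ->]].
    rewrite inner_scalel normrM (ger0_norm Ci).
    by rewrite mulrC ler_pdivrMr // mul1r; exact: gB.
  have := dualB _ BACg; rewrite inner_scaler normrM (ger0_norm Ci).
  move/(ler_wpM2l (ltW Cm)); rewrite mulrA mulfV ?gt_eqF // mul1r mulr1.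
  suff -> : inner psi g =
     inner (fun x => psi x ^+ j.+1 * \prod_(i < m | (j.+1 <= i)%N) D (fs i) x) h by [].
  rewrite /inner; congr (_ / _); apply: eq_bigr => x _.
  rewrite /g exprS; ring.
have := step m (leqnn m) (fun _ => psi).
have Hv : forall i : 'I_m, (m <= i)%N -> F psi.
  by move=> i; rewrite leqNgt ltn_ord.
move=> /(_ Hv).
suff -> : (fun x => psi x ^+ m * \prod_(i < m | (m <= i)%N) D psi x) = ppow psi m by [].
apply: funext => x; rewrite big_pred0 ?mulr1 //.
by move=> i; rewrite leqNgt ltn_ord.
Qed.
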